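(* Let $n\geq 3$ be an odd integer and define $$\phi(x)=\frac{5}{4}\sin(x)+\sum_{k=2}^{n-1}\sin(kx)+\frac{2n-3}{4n}\sin(nx).$$ Then $\phi(x)\geq 0$ for all $x\in[0,\pi]$. *)

(* Defs.v *)
From Stdlib Require Import Reals.
Open Scope R_scope.

(* sum_{k=a}^{b} f k  (empty when b < a), defined as sum over k = a .. a+m-1 *)
Fixpoint sum_range (f : nat -> R) (a m : nat) : R :=
  match m with
  | O => 0
  | S m' => f a + sum_range f (S a) m'
  end.

Definition phi (n : nat) (x : R) : R :=
  5/4 * sin x
  + sum_range (fun k => sin (INR k * x)) 2 (n - 2)
  + (2 * INR n - 3) / (4 * INR n) * sin (INR n * x).

(* Main.v *)
Require Import Defs.
From Stdlib Require Import Reals Arith Lra Lia Psatz.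
Open Scope R_scope.
Lemma sin_ub_eq a : sin_ub a = a - a^3/6 + a^5/120 - a^7/5040 + a^9/362880.
Proof. unfold sin_ub, sin_approx, sin_term. cbn [sum_f_R0 Nat.mul Nat.add].
  cbv [Factorial.fact]. rewrite !mult_INR. simpl INR. field. Qed.
Lemma sin_lb_eq a : sin_lb a = a - a^3/6 + a^5/120 - a^7/5040.
Proof. unfold sin_lb, sin_approx, sin_term. cbn [sum_f_R0 Nat.mul Nat.add].
  cbv [Factorial.fact]. rewrite !mult_INR. simpl INR. field. Qed.
Lemma cos_ub_eq a : cos_ub a = 1 - a^2/2 + a^4/24 - a^6/720 + a^8/40320.
Proof. unfold cos_ub, cos_approx, cos_term. cbn [sum_f_R0 Nat.mul Nat.add].
  cbv [Factorial.fact]. rewrite !mult_INR. simpl INR. field. Qed.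
Lemma cos_lb_eq a : cos_lb a = 1 - a^2/2 + a^4/24 - a^6/720.
Proof. unfold cos_lb, cos_approx, cos_term. cbn [sum_f_R0 Nat.mul Nat.add].
  cbv [Factorial.fact]. rewrite !mult_INR. simpl INR. field. Qed.

Lemma sin_ub5 a : 0 <= a -> a <= PI -> sin a <= a - a^3/6 + a^5/120.
Proof. intros h1 h2. destruct (SIN a h1 h2) as [_ h]. rewrite sin_ub_eq in h.
  pose proof PI_4. assert (a*a <= 16) by nra.
  assert (0 <= a^7) by (apply pow_le; lra).
  assert (a^9 = a^7 * (a*a)) by field. nra. Qed.
Lemma sin_lb3 a : 0 <= a -> a <= PI -> a - a^3/6 <= sin a.
Proof. intros h1 h2. destruct (SIN a h1 h2) as [h _]. rewrite sin_lb_eq in h.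
  pose proof PI_4. assert (a*a <= 16) by nra.
  assert (0 <= a^5) by (apply pow_le; lra).
  assert (a^7 = a^5 * (a*a)) by field. nra. Qed.
Lemma cos_lb6 a : 0 <= a -> a <= PI/2 -> 1 - a^2/2 + a^4/24 - a^6/720 <= cos a.
Proof. intros h1 h2. assert (- PI/2 <= a) by (pose proof PI_RGT_0; lra).
  destruct (COS a H h2) as [h _]. rewrite cos_lb_eq in h. exact h. Qed.
Lemma cos_ub4 a : 0 <= a -> a <= PI/2 -> cos a <= 1 - a^2/2 + a^4/24.
Proof. intros h1 h2. assert (- PI/2 <= a) by (pose proof PI_RGT_0; lra).
  destruct (COS a H h2) as [_ h]. rewrite cos_ub_eq in h.
  pose proof PI_4. assert (a*a <= 4) by nra.
  assert (0 <= a^6) by (apply pow_le; lra).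
  assert (a^8 = a^6 * (a*a)) by field. nra. Qed.

Lemma psd S T a b : 0 < S -> 9 * T^2 <= 8 * S^2 -> 0 <= S*a^2 + 2*S*b^2 - 3*T*a*b.
Proof. intros hS hT.
  assert (H : S * (S*a^2 + 2*S*b^2 - 3*T*a*b) = (S*a - 3/2*T*b)^2 + (2*S^2 - 9/4*T^2)*b^2) by field.
  assert (0 <= (S*a - 3/2*T*b)^2) by apply pow2_ge_0.
  assert (0 <= (2*S^2 - 9/4*T^2)*b^2) by (apply Rmult_le_pos; [lra| apply pow2_ge_0]).
  assert (0 <= S * (S*a^2 + 2*S*b^2 - 3*T*a*b)) by lra.
  destruct (Rle_or_lt 0 (S*a^2 + 2*S*b^2 - 3*T*a*b)) as [h|h]; auto.
  assert (S * (S*a^2 + 2*S*b^2 - 3*T*a*b) < 0) by (apply Rmult_pos_neg; auto). lra. Qed.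

Lemma polyP y u : 0 <= y -> y <= 3/2 -> 0 <= u -> u <= y^2/36 ->
  0 <= y*(1-u/6)*(2 + (1 - y^2/2 + y^4/24 - y^6/720) - u)
       - 3*(1 - u/2 + u^2/24)*(y - y^3/6 + y^5/120).
Proof. intros h1 h2 h3 h4.
  set (s := y - y^3/6 + y^5/120).
  assert (E : y*(1-u/6)*(2 + (1 - y^2/2 + y^4/24 - y^6/720) - u) - 3*(1 - u/2 + u^2/24)*s
    = (y^5/60 - y^7/720) + u*(-y^3/6 + y^5/180 + y^7/4320) + u^2*(y/6 - s/8)) by (unfold s; field).
  rewrite E.
  assert (hs : s <= 4/3*y). { unfold s. assert (y^2 <= 9/4) by nra.
     assert (0 <= y^3) by (apply pow_le; lra).
     assert (y^5 = y^3*y^2) by field. assert (y^3 = y*y^2) by field. nra. }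
  assert (0 <= u^2*(y/6 - s/8)) by (apply Rmult_le_pos; [apply pow2_ge_0 | lra]).
  assert (0 <= y^5) by (apply pow_le; lra).
  assert (0 <= y^7) by (apply pow_le; lra).
  assert (0 <= y^3) by (apply pow_le; lra).
  assert (u*(-y^3/6 + y^5/180 + y^7/4320) >= - (y^2/36) * y^3/6) by nra.
  assert (y^7 = y^5*y^2) by field. assert (y^2 <= 9/4) by nra.
  assert (y^5 = y^2*y^3) by field.
  nra. Qed.

Lemma Gpos (N e : R) : 3 <= N -> 0 <= e -> e <= PI/2 ->
  0 <= N * sin e * (cos e ^2 + 2 * cos (N*e) ^2) - 3 * cos e * sin (N*e) * cos (N*e).
Proof.
  intros hN he0 he1. set (d := N*e). pose proof PI2_1 as hpi1. pose proof PI2_3_2 as hpi32.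
  assert (hd0 : 0 <= d) by (unfold d; nra).
  assert (hd3 : 3*e <= d) by (unfold d; nra).
  assert (hsd : sin d ^2 <= 1) by (pose proof (sin2_cos2 d); unfold Rsqr in *; nra).
  assert (Hpsd : 9 * sin d ^2 <= 8 * (N * sin e)^2 -> 0 < N * sin e ->
     0 <= N * sin e * (cos e ^2 + 2 * cos d ^2) - 3 * cos e * sin d * cos d).
  { intros h1 h2. replace (N * sin e * (cos e ^2 + 2 * cos d ^2) - 3 * cos e * sin d * cos d)
      with ((N*sin e) * cos e^2 + 2 * (N*sin e) * cos d^2 - 3 * sin d * cos e * cos d) by field.
    apply psd; auto. }
  destruct (Rle_or_lt (37/100) e) as [hC | hC].
  - assert (h1 : sin (37/100) <= sin e) by (apply sin_incr_1; lra).
    assert (h2 := sin_lb3 (37/100) ltac:(lra) ltac:(lra)).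
    assert (hS : 1 <= N * sin e) by nra.
    apply Hpsd; nra.
  - destruct (Rle_or_lt (75/100) d) as [hB | hA].
    + assert (h1 := sin_lb3 e he0 ltac:(lra)).
      assert (h2 : 977/1000 * e <= sin e) by nra.
      assert (hS : 977/1000 * d <= N * sin e) by (unfold d; nra).
      destruct (Rle_or_lt (11/10) d) as [hB1 | hB2].
      * apply Hpsd; nra.
      * assert (h3 := sin_ub5 d hd0 ltac:(lra)).
        assert (h4 : 0 <= sin d) by (apply sin_ge_0; lra).
        assert (hw1 : 9/16 <= d^2) by nra. assert (hw2 : d^2 <= 121/100) by nra.
        assert (hw : 0 <= (d^2 - 9/16) * (121/100 - d^2)) by (apply Rmult_le_pos; lra).
        assert (h5 : d^2/6 - d^4/120 >= 9/100) by (replace (d^4) with (d^2*d^2) by field; nra).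
        assert (h6 : sin d <= 91/100 * d).
        { assert (d - d^3/6 + d^5/120 = d * (1 - (d^2/6 - d^4/120))) by field. nra. }
        apply Hpsd; nra.
    + set (y := 2*d).
      assert (Ecos : cos d ^2 = (1 + cos y)/2) by (unfold y; rewrite cos_2a_cos; field).
      assert (Esin : sin d * cos d = sin y / 2) by (unfold y; rewrite sin_2a; field).
      replace (N * sin e * (cos e ^2 + 2 * cos d ^2) - 3 * cos e * sin d * cos d)
        with (N * sin e * (cos e^2 + 1 + cos y) - 3/2 * cos e * sin y)
        by (replace (3 * cos e * sin d * cos d) with (3 * cos e * (sin d * cos d)) by field;
            rewrite Ecos, Esin; field).
      assert (hy0 : 0 <= y) by (unfold y; lra). assert (hy1 : y <= 3/2) by (unfold y; lra).
      assert (he2 : e <= 1/4) by lra.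
      assert (h1 := sin_lb3 e he0 ltac:(lra)).
      assert (hA0 : d - d*e^2/6 <= N * sin e) by (unfold d; nra).
      assert (h2 := cos_lb6 e he0 ltac:(lra)).
      assert (h2' : 1 - e^2/2 <= cos e).
      { assert (0 <= e^4) by (apply pow_le; lra). assert (e^2 <= 1/16) by nra.
        assert (e^6 = e^4*e^2) by field. nra. }
      assert (h3 : 1 - e^2 <= cos e ^2) by nra.
      assert (h4 := cos_ub4 e he0 ltac:(lra)).
      assert (h5 := cos_lb6 y hy0 ltac:(lra)).
      assert (h6 := sin_ub5 y hy0 ltac:(lra)).
      assert (h7 : 0 <= sin y) by (apply sin_ge_0; lra).
      assert (hB0 : 0 <= 2 - e^2 + (1 - y^2/2 + y^4/24 - y^6/720)) by nra.
      assert (hA00 : 0 <= d - d*e^2/6) by nra.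
      assert (hAB : (d - d*e^2/6) * (2 - e^2 + (1 - y^2/2 + y^4/24 - y^6/720))
                    <= N * sin e * (cos e^2 + 1 + cos y)).
      { apply Rmult_le_compat; auto; lra. }
      assert (hCS : cos e * sin y <= (1 - e^2/2 + e^4/24) * (y - y^3/6 + y^5/120)).
      { assert (0 <= cos e) by nra. apply Rmult_le_compat; auto; lra. }
      assert (hP := polyP y (e^2) hy0 hy1 ltac:(nra) ltac:(unfold y; nra)).
      assert (Ed : d = y/2) by (unfold y; field).
      rewrite Ed in hAB.
      nra.
Qed.
Lemma key_sin x a : 2 * sin (x/2) * sin (a*x) = cos ((a-1/2)*x) - cos ((a+1/2)*x).
Proof. replace ((a-1/2)*x) with (a*x - x/2) by field.
  replace ((a+1/2)*x) with (a*x + x/2) by field.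
  rewrite cos_minus, cos_plus. field. Qed.

Lemma sum_id x : forall m a, 2 * sin (x/2) * sum_range (fun k => sin (INR k * x)) a m
  = cos ((INR a - 1/2) * x) - cos ((INR a + INR m - 1/2) * x).
Proof. induction m as [|m IH]; intro a; simpl sum_range.
  - simpl INR. replace (INR a + 0 - 1/2) with (INR a - 1/2) by field. field.
  - rewrite Rmult_plus_distr_l, IH, key_sin, !S_INR.
    replace ((INR a + 1 - 1/2)) with (INR a + 1/2) by field.
    replace (INR a + 1 + INR m - 1 / 2) with (INR a + (INR m + 1) - 1/2) by field. field. Qed.

Lemma per : forall m z, (sin (INR m * PI + z) = sin z /\ cos (INR m * PI + z) = cos z)
  \/ (sin (INR m * PI + z) = - sin z /\ cos (INR m * PI + z) = - cos z).
Proof. induction m as [|m IH]; intro z.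
  - left. simpl INR. rewrite Rmult_0_l, Rplus_0_l. auto.
  - rewrite S_INR. replace ((INR m + 1) * PI + z) with ((INR m * PI + z) + PI) by field.
    rewrite neg_sin, neg_cos. destruct (IH z) as [[h1 h2]|[h1 h2]]; rewrite h1, h2.
    + right; auto. + left; split; field. Qed.

Lemma sum0 : forall m a, sum_range (fun k => sin (INR k * 0)) a m = 0.
Proof. induction m as [|m IH]; intro a; simpl; auto. rewrite IH, Rmult_0_r, sin_0. field. Qed.

Theorem lemma1 (n : nat) (hn : (3 <= n)%nat) (hodd : Nat.Odd n) (x : R)
  (hx0 : 0 <= x) (hxpi : x <= PI) : 0 <= phi n x.
Proof.
  destruct (Rle_lt_or_eq_dec 0 x hx0) as [hx | hx].
  2: { subst x. unfold phi. rewrite sum0, !Rmult_0_r, sin_0. lra. }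
  unfold phi.
  assert (hsum := sum_id x (n-2) 2).
  rewrite minus_INR in hsum by lia.
  replace (INR 2) with 2 in hsum by (simpl; field).
  set (N := INR n) in *.
  assert (hN : 3 <= N) by (unfold N; replace 3 with (INR 3) by (simpl; field); apply le_INR; lia).
  destruct hodd as [m hm].
  set (t := x/2) in *. set (e := PI/2 - t).
  assert (hxt : x = 2*t) by (unfold t; field).
  assert (he0 : 0 <= e) by (unfold e, t; lra).
  assert (he1 : e < PI/2) by (unfold e, t; lra).
  assert (hG := Gpos N e hN he0 ltac:(lra)).
  assert (St : sin t = cos e) by (unfold e; rewrite cos_shift; reflexivity).
  assert (Ct : cos t = sin e) by (unfold e; rewrite sin_shift; reflexivity).
  assert (Nt : N * t = INR m * PI + (PI/2 - N*e)).
  { unfold e, N. rewrite hm, plus_INR, mult_INR. simpl INR. field. }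
  assert (hsk : sin (N*t) ^2 = cos (N*e) ^2 /\ sin (N*t) * cos (N*t) = sin (N*e) * cos (N*e)).
  { rewrite Nt. destruct (per m (PI/2 - N*e)) as [[h1 h2]|[h1 h2]]; rewrite h1, h2, sin_shift, cos_shift;
    split; field. }
  destruct hsk as [hs2 hsk].
  assert (hSt : 0 < sin t) by (rewrite St; apply cos_gt_0; lra).
  assert (P1 := sin2_cos2 t). assert (P2 := sin2_cos2 (N*t)). unfold Rsqr in P1, P2.
  assert (Hphi : 2 * sin t * (5 / 4 * sin x + sum_range (fun k : nat => sin (INR k * x)) 2 (n - 2) +
     (2 * N - 3) / (4 * N) * sin (N * x)) =
     5/2*sin t*(2*sin t*cos t) + ((cos t*cos t - sin t*sin t)*cos t - 2*sin t*cos t*sin t)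
     - ((cos (N*t)*cos (N*t) - sin (N*t)*sin (N*t))*cos t + 2*sin (N*t)*cos (N*t)*sin t)
     + 2*((2*N-3)/(4*N))*sin t*(2*sin (N*t)*cos (N*t))).
  { rewrite Rmult_plus_distr_l, Rmult_plus_distr_l.
    replace (2 * sin t * sum_range (fun k : nat => sin (INR k * x)) 2 (n - 2)) with
      (cos ((2 - 1 / 2) * x) - cos ((2 + (N - 2) - 1 / 2) * x)) by (rewrite <- hsum; reflexivity).
    replace ((2 - 1 / 2) * x) with (2*t + t) by (rewrite hxt; field).
    replace ((2 + (N - 2) - 1 / 2) * x) with (2*(N*t) - t) by (rewrite hxt; field).
    replace (N * x) with (2*(N*t)) by (rewrite hxt; field).
    rewrite hxt, cos_plus, cos_minus, !cos_2a, !sin_2a. field. lra. }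
  assert (Hfin : 2 * sin t * (5 / 4 * sin x + sum_range (fun k : nat => sin (INR k * x)) 2 (n - 2) +
     (2 * N - 3) / (4 * N) * sin (N * x)) * N =
     N * sin e * (cos e ^2 + 2 * cos (N*e) ^2) - 3 * cos e * sin (N*e) * cos (N*e)).
  { rewrite Hphi. replace (3 * cos e * sin (N*e) * cos (N*e)) with (3 * cos e * (sin (N*e) * cos (N*e))) by field.
    rewrite <- hs2, <- hsk, <- St, <- Ct.
    match goal with |- ?L = ?R => assert (Hd : L - R = N*cos t*(sin t*sin t + cos t*cos t - 1)
       - N*cos t*(sin (N*t) * sin (N*t) + cos (N*t) * cos (N*t) - 1)) by (field; lra) end.
    rewrite P1, P2 in Hd. lra. }
  set (Φ := 5 / 4 * sin x + sum_range (fun k : nat => sin (INR k * x)) 2 (n - 2) +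
     (2 * N - 3) / (4 * N) * sin (N * x)) in *.
  rewrite <- Hfin in hG.
  destruct (Rle_or_lt 0 Φ) as [h|h]; auto.
  assert (0 < 2 * sin t * N) by nra.
  nra.
Qed.
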